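(* Assume $\delta\in\mathcal P$, and let $\hat v(t,c,y)=\frac{c^{1-\delta}}{1-\delta}e^{\frac{\hat f(t)}2y^2+\hat g(t)y+\hat h(t)}$ and $\hat V(t,c,\gamma)=\frac{c^{1-\delta}}{1-\delta}e^{\frac{\bar f(t)}2\gamma^2+\bar g(t)\gamma+\bar h(t)}$ be the full- and partial-information value functions. Define the loss of utility $L_t=\mathbb E[\hat v(t,c,Y_t)-\hat V(t,c,\Gamma_t)\mid\mathcal F_t]$ for $c>0$, and the efficiency $\zeta>0$ as the solution of $\mathbb E[\hat v(0,\zeta,Y_0)-\hat V(0,1,\Gamma_0)\mid\mathcal F_0]=0$. Then, with $u(s)=\tilde\Sigma_Y\tilde\Sigma_S^\top\hat f(s)+\mathbf a^\top$ and $K_t=\int_t^T\frac{P(s)}{1-P(s)\hat f(s)}u(s)\hat\Theta^{-1}u(s)^\top ds$, $$L_t=\frac{c^{1-\delta}}{1-\delta}\Big(e^{\frac{1-\delta}2K_t}-1\Big)e^{\frac{\bar f(t)}2\Gamma_t^2+\bar g(t)\Gamma_t+\bar h(t)},\qquad \zeta=\exp\{-\tfrac12K_0\}.$$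
   Context: Model: $T>0$; filtered space with complete right-continuous $\mathbb G$ supporting independent Brownian motions $Z^S\in\mathbb R^n$, $Z^Y\in\mathbb R$. Parameters $r>0$, $\mathbf r_n=r\mathbf1_n$, $\mathbf a,\mathbf b\in\mathbb R^n$, $\lambda,\beta\in\mathbb R$, $\sigma_Y>0$, $\Sigma_S=\mathrm{diag}(\sigma_i)$, $\sigma_i>0$; positive definite correlation matrix $R=LL^\top$ (Cholesky), $L_S=(l_{ij})_{i,j\le n}$, $L_Y=(l_{n+1,j})_{j\le n}$, $\tilde\Sigma_S=\Sigma_SL_S$, $\tilde\Sigma_Y=\sigma_YL_Y$, $\tilde\sigma_Y=\sigma_Yl_{n+1,n+1}$. $dY_t=(\lambda Y_t+\beta)dt+\tilde\Sigma_YdZ^S_t+\tilde\sigma_YdZ^Y_t$, $Y_0\sim N(\Gamma_0,P_0)$; $dS_t=\mathrm{diag}(S_t)[(\mathbf aY_t+\mathbf b)dt+\tilde\Sigma_SdZ^S_t]$. Green/brown split at $k$; $\varepsilon\ge0$, $\mathbf e=(0_k,\varepsilon\mathbf1_{n-k})$, $D_{\mathbf e}=\mathrm{diag}(e_i\sigma_i^2)$; $\delta\in(0,1)\cup(1,\infty)$, $\hat\Theta=D_{\mathbf e}+\delta\tilde\Sigma_S\tilde\Sigma_S^\top$. $\mathbb F$ = augmented natural filtration of $S$; $\Gamma_t=\mathbb E[Y_t|\mathcal F_t]$; conditionally on $\mathcal F_t$, $Y_t\sim N(\Gamma_t,P(t))$ with $P$ deterministic solving $P'=2\lambda P+\sigma_Y^2-\bar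 P(\tilde\Sigma_S\tilde\Sigma_S^\top)^{-1}\bar P^\top$, $P(0)=P_0$, $\bar P(t)=\tilde\Sigma_Y\tilde\Sigma_S^\top+P(t)\mathbf a^\top$. Full-information system (zero terminal values, unique $\mathcal C^1_b$ solution for $\delta\in\mathcal P$): $\hat f'+[(1-\delta)\tilde\Sigma_Y\tilde\Sigma_S^\top\hat\Theta^{-1}\tilde\Sigma_S\tilde\Sigma_Y^\top+\sigma_Y^2]\hat f^2+2[(1-\delta)\tilde\Sigma_Y\tilde\Sigma_S^\top\hat\Theta^{-1}\mathbf a+\lambda]\hat f+(1-\delta)\mathbf a^\top\hat\Theta^{-1}\mathbf a=0$; $\hat g'+[(1-\delta)\tilde\Sigma_Y\tilde\Sigma_S^\top\hat\Theta^{-1}\mathbf a+\lambda]\hat g+[(1-\delta)\tilde\Sigma_Y\tilde\Sigma_S^\top\hat\Theta^{-1}(\mathbf b-\mathbf r_n)+\beta]\hat f+[(1-\delta)\tilde\Sigma_Y\tilde\Sigma_S^\top\hat\Theta^{-1}\tilde\Sigma_S\tilde\Sigma_Y^\top+\sigma_Y^2]\hat f\hat g+(1-\delta)\mathbf a^\top\hat\Theta^{-1}(\mathbf b-\mathbf r_n)=0$; $\hat h'+(1-\delta)r+[(1-\delta)\tilde\Sigma_Y\tilde\Sigma_S^\top\hat\Theta^{-1}(\mathbf b-\mathbf r_n)+\beta]\hat g+\frac{\sigma_Y^2}2\hat f+\frac12[(1-\delta)\tilde\Sigma_Y\tilde\Sigma_S^\top\hat\Theta^{-1}\tilde\Sigma_S\tilde\Sigma_Y^\top+\sigma_Y^2]\hat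 g^2+\frac{1-\delta}2(\mathbf b-\mathbf r_n)^\top\hat\Theta^{-1}(\mathbf b-\mathbf r_n)=0$. Partial-information functions: $\bar f=\hat f/(1-P\hat f)$, $\bar g=\hat g/(1-P\hat f)$, $\bar h(t)=\hat h(t)-\frac12\log(1-P(t)\hat f(t))+\frac12\frac{\hat g(t)^2P(t)}{1-P(t)\hat f(t)}-\frac{1-\delta}2K_t$, where $1-P\hat f>0$ on $[0,T]$. $\mathcal P=\{\delta\in(0,1)\cup(1,\infty):\Delta(\delta)>0\}$, with $\hat\Theta(x)=D_{\mathbf e}+x\tilde\Sigma_S\tilde\Sigma_S^\top$ and $\Delta(x)=4\{[(1-x)\tilde\Sigma_Y\tilde\Sigma_S^\top\hat\Theta(x)^{-1}\mathbf a+\lambda]^2-[(1-x)^2\tilde\Sigma_Y\tilde\Sigma_S^\top\hat\Theta(x)^{-1}\tilde\Sigma_S\tilde\Sigma_Y^\top+(1-x)\sigma_Y^2]\mathbf a^\top\hat\Theta(x)^{-1}\mathbf a\}$. *)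

(* Defs.v *)
From HB Require Import structures.
From mathcomp Require Import all_boot all_order all_algebra.
From mathcomp Require Import all_classical all_reals all_analysis.
Set Implicit Arguments. Unset Strict Implicit. Unset Printing Implicit Defensive.
Import Order.TTheory GRing.Theory Num.Theory.
Import numFieldNormedType.Exports.
Local Open Scope classical_set_scope.
Local Open Scope ring_scope.

(* Model parameters of the paper.  The correlation matrix is R = Lc Lc^T
   (Cholesky factor Lc of size n+1). *)
Record params (R : realType) (n : nat) := Params {
  rr : R;                      (* interest rate r *)
  av : 'cV[R]_n;
  bv : 'cV[R]_n;
  lam : R;
  beta : R;
  sigY : R;
  sig : 'I_n -> R;
  Lc : 'M[R]_(n + 1);
  kk : nat;                    (* green/brown split index k *)
  eps : R;
  delta : R;
  TT : R;
  Gam0 : R;                    (* mean Gamma_0 of Y_0 *)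
  P0 : R                       (* variance P_0 of Y_0 *)
}.

Section Model.
Context {R : realType} {n : nat} (p : params R n).

Definition sc (M : 'M[R]_1) : R := M 0 0.

Definition LS : 'M[R]_n := ulsubmx (Lc p).
Definition LY : 'M[R]_(1, n) := dlsubmx (Lc p).
Definition SigS : 'M[R]_n := diag_mx (\row_i sig p i).
Definition SigSt : 'M[R]_n := SigS *m LS.
Definition SigYt : 'M[R]_(1, n) := sigY p *: LY.
Definition rn : 'cV[R]_n := const_mx (rr p).

Definition ev (i : 'I_n) : R := if (i < kk p)%N then 0 else eps p.
Definition De : 'M[R]_n := diag_mx (\row_i (ev i * sig p i ^+ 2)).

Definition Theta (x : R) : 'M[R]_n := De + x *: (SigSt *m SigSt^T).

Definition qYY x := sc (SigYt *m SigSt^T *m invmx (Theta x) *m SigSt *m SigYt^T).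
Definition qYa x := sc (SigYt *m SigSt^T *m invmx (Theta x) *m av p).
Definition qaa x := sc ((av p)^T *m invmx (Theta x) *m av p).
Definition qYb x := sc (SigYt *m SigSt^T *m invmx (Theta x) *m (bv p - rn)).
Definition qab x := sc ((av p)^T *m invmx (Theta x) *m (bv p - rn)).
Definition qbb x := sc ((bv p - rn)^T *m invmx (Theta x) *m (bv p - rn)).

Definition Delta (x : R) : R :=
  4 * (((1 - x) * qYa x + lam p) ^+ 2
       - ((1 - x) ^+ 2 * qYY x + (1 - x) * sigY p ^+ 2) * qaa x).

Definition in_calP (x : R) : Prop := (0 < x /\ x != 1) /\ 0 < Delta x.

Definition solves_on (T : R) (f F : R -> R) : Prop :=
  {within `[0, T], continuous f} /\
  forall t, 0 < t < T -> derivable f t 1 /\ derive1 f t = F t.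

Definition dl := delta p.

Definition fhat_rhs (fh : R -> R) t : R :=
  - (((1 - dl) * qYY dl + sigY p ^+ 2) * fh t ^+ 2
     + 2 * ((1 - dl) * qYa dl + lam p) * fh t + (1 - dl) * qaa dl).
Definition ghat_rhs (fh gh : R -> R) t : R :=
  - (((1 - dl) * qYa dl + lam p) * gh t
     + ((1 - dl) * qYb dl + beta p) * fh t
     + ((1 - dl) * qYY dl + sigY p ^+ 2) * fh t * gh t
     + (1 - dl) * qab dl).
Definition hhat_rhs (fh gh : R -> R) t : R :=
  - ((1 - dl) * rr p + ((1 - dl) * qYb dl + beta p) * gh t
     + sigY p ^+ 2 / 2 * fh t
     + 1 / 2 * ((1 - dl) * qYY dl + sigY p ^+ 2) * gh t ^+ 2
     + (1 - dl) / 2 * qbb dl).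

(* filter Riccati equation for the conditional variance P *)
Definition Pbar (P : R -> R) t : 'M[R]_(1, n) := SigYt *m SigSt^T + P t *: (av p)^T.
Definition P_rhs (P : R -> R) t : R :=
  2 * lam p * P t + sigY p ^+ 2
  - sc (Pbar P t *m invmx (SigSt *m SigSt^T) *m (Pbar P t)^T).

Definition uvec (fh : R -> R) s : 'M[R]_(1, n) := fh s *: (SigYt *m SigSt^T) + (av p)^T.
Definition Kt (fh P : R -> R) (t : R) : R :=
  Rintegral lebesgue_measure `[t, TT p]
    (fun s => P s / (1 - P s * fh s) * sc (uvec fh s *m invmx (Theta dl) *m (uvec fh s)^T)).

Definition fbar (fh P : R -> R) t := fh t / (1 - P t * fh t).
Definition gbar (fh gh P : R -> R) t := gh t / (1 - P t * fh t).
Definition hbar (fh gh hh P : R -> R) t :=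
  hh t - 1 / 2 * ln (1 - P t * fh t) + 1 / 2 * (gh t ^+ 2 * P t / (1 - P t * fh t))
  - (1 - dl) / 2 * Kt fh P t.

Definition vhat (fh gh hh : R -> R) t c y :=
  c `^ (1 - dl) / (1 - dl) * expR (fh t / 2 * y ^+ 2 + gh t * y + hh t).
Definition Vhat (fh gh hh P : R -> R) t c g :=
  c `^ (1 - dl) / (1 - dl)
  * expR (fbar fh P t / 2 * g ^+ 2 + gbar fh gh P t * g + hbar fh gh hh P t).

End Model.

Definition gauss_exp {R : realType} (m v : R) (F : R -> R) : R :=
  Rintegral lebesgue_measure setT (fun y => F y * normal_pdf m (Num.sqrt v) y).

(* Main.v *)
Require Import Defs.
From HB Require Import structures.
From mathcomp Require Import all_boot all_order all_algebra.
From mathcomp Require Import all_classical all_reals all_analysis.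
From mathcomp Require Import ring lra.
Import Order.TTheory GRing.Theory Num.Theory.
Local Open Scope classical_set_scope.
Local Open Scope ring_scope.

Section Helpers.
Set Implicit Arguments. Unset Strict Implicit. Unset Printing Implicit Defensive.
Import numFieldNormedType.Exports.
Section S.
Variable R : realType.
Lemma cont_at (T t : R) (P : R -> R) e : {within `[0, T], continuous P} -> 0 <= t <= T -> 0 < e ->
  exists2 d, 0 < d & forall u, 0 <= u <= T -> `|u - t| < d -> `|P u - P t| < e.
Proof.
move=> cP ht e0.
have := (@subspace_continuousP _ `[0, T] _ P).1 cP t.
have tin : `[0, T]%classic t by rewrite /= in_itv /=.
move=> /(_ tin) /cvgrPdist_lt /(_ e e0).
rewrite near_withinE => /nbhs_ballP [d /= d0 Hd].
exists d => // u hu hut.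
rewrite distrC; apply: Hd.
  by rewrite /ball /= distrC.
by rewrite /= in_itv /=.
Qed.
Lemma ode_pos (T : R) (P G : R -> R) eta :
 0 < eta -> (forall x, `|x| < eta -> 0 < G x) ->
 {within `[0,T], continuous P} ->
 (forall t, 0 < t < T -> derivable P t 1 /\ derive1 P t = G (P t)) ->
 0 < P 0 -> forall t, 0 <= t <= T -> 0 < P t.
Proof.
move=> eta0 HG cP dP P00 t ht.
rewrite ltNge; apply/negP => Pt0.
set S := [set u | 0 <= u <= T /\ P u <= 0].
have St : S t by [].
have lbS : lbound S 0 by move=> u [/andP[]].
have hS : has_inf S by split; [exists t | exists 0].
set ts := inf S.
have ts0 : 0 <= ts by apply: lb_le_inf => //; exists t.
have tsle : forall u, S u -> ts <= u by move=> u Su; exact: (ge_inf (proj2 hS)).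
have tsT : ts <= T by apply: le_trans (tsle _ St) _; case/andP: ht.
have eta2 : 0 < eta / 2 by rewrite divr_gt0.
have [d d0 Hd] := cont_at cP (ltac:(by rewrite ts0 tsT) : 0 <= ts <= T) eta2.
have [e Se ets] := inf_adherent d0 hS.
have tse : ts <= e := tsle _ Se.
have [s [s0 sts sd Ps]] : exists s, [/\ 0 <= s, s <= ts, ts - s < d & 0 < P s].
  have [->|tsp] := eqVneq ts 0.
    by exists 0; split => //; rewrite subrr.
  have tsp' : 0 < ts by rewrite lt_neqAle eq_sym tsp ts0.
  exists (Num.max 0 (ts - d / 2)); split.
  - by rewrite le_max lexx.
  - by rewrite ge_max ts0 /=; lra.
  - have : ts - d / 2 <= Num.max 0 (ts - d / 2) by rewrite le_max lexx orbT.
    lra.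
  - rewrite ltNge; apply/negP => Pm.
    have : S (Num.max 0 (ts - d / 2)).
      split => //; apply/andP; split; first by rewrite le_max lexx.
      by rewrite ge_max (le_trans ts0 tsT) /=; lra.
    move/tsle; rewrite le_max => /orP[]; lra.
have [/andP[e0 eT] Pe] := Se.
have se : s < e.
  rewrite lt_neqAle (le_trans sts tse) andbT; apply/eqP => es.
  by move: Pe; rewrite -es leNgt Ps.
have [c cin Hc] := @MVT R P (derive1 P) s e se
  (fun x xin => ltac:(
     rewrite derive1E; apply: derivableP;
     apply: (proj1 (dP x _)); move: xin; rewrite in_itv /= => /andP[h1 h2];
     apply/andP; split; lra))
  (continuous_subspaceW (ltac:(move=> x; rewrite /= !in_itv /= => /andP[h1 h2];
     apply/andP; split; lra) : `[s, e] `<=` `[0, T]) cP).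
move: cin; rewrite in_itv /= => /andP[sc ce].
have := Hd s (ltac:(apply/andP; split; lra)) (ltac:(rewrite ltr_norml; apply/andP; split; lra)).
have := Hd e (ltac:(apply/andP; split; lra)) (ltac:(rewrite ltr_norml; apply/andP; split; lra)).
have := Hd c (ltac:(apply/andP; split; lra)) (ltac:(rewrite ltr_norml; apply/andP; split; lra)).
rewrite !ltr_norml => /andP[c1 c2] /andP[e1 e2] /andP[s1 s2].
have Gc : 0 < G (P c).
  by apply: HG; rewrite ltr_norml; apply/andP; split; lra.
have dc : derive1 P c = G (P c) by apply: (proj2 (dP c _)); apply/andP; split; lra.
move: Hc; rewrite dc => Hc.
have : 0 < G (P c) * (e - s) by rewrite mulr_gt0 // subr_gt0.
rewrite -Hc; lra.
Qed.
End S.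

Section M.
Variables (R : realType) (n : nat) (p : params R n).

Lemma sc_add (X Y : 'M[R]_1) : sc (X + Y) = sc X + sc Y.
Proof. by rewrite /sc mxE. Qed.
Lemma sc_scale (x : R) (X : 'M[R]_1) : sc (x *: X) = x * sc X.
Proof. by rewrite /sc mxE. Qed.

Lemma quad_expand (A a : 'M[R]_(1, n)) (M : 'M[R]_n) x :
  sc ((A + x *: a) *m M *m (A + x *: a)^T) =
  sc (A *m M *m A^T) + x * (sc (A *m M *m a^T) + sc (a *m M *m A^T))
  + x ^+ 2 * sc (a *m M *m a^T).
Proof.
rewrite raddfD /= linearZ /= mulmxDl !mulmxDr !mulmxDl.
rewrite -!scalemxAl -!scalemxAr !sc_add !sc_scale.
ring.
Qed.

Definition Amx := SigYt p *m (SigSt p)^T.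
Definition Mmx := invmx (SigSt p *m (SigSt p)^T).

Lemma P_rhs_quad (P : R -> R) t :
  P_rhs p P t = (sigY p ^+ 2 - sc (Amx *m Mmx *m Amx^T))
     + P t * (2 * lam p - (sc (Amx *m Mmx *m (av p)) + sc ((av p)^T *m Mmx *m Amx^T)))
     + P t ^+ 2 * (- sc ((av p)^T *m Mmx *m (av p))).
Proof.
rewrite /P_rhs /Pbar -/Amx -/Mmx quad_expand trmxK. ring.
Qed.

Hypothesis sig_pos : forall i, 0 < sig p i.
Hypothesis Ltri : forall i j : 'I_(n + 1), (i < j)%N -> Lc p i j = 0.
Hypothesis Ldiag : forall i : 'I_(n + 1), 0 < Lc p i i.
Hypothesis Lcorr : forall i : 'I_(n + 1), (Lc p *m (Lc p)^T) i i = 1.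

Lemma SigSt_unit : SigSt p \in unitmx.
Proof.
rewrite /SigSt unitmx_mul !unitmxE !unitfE.
rewrite det_diag det_trig; last first.
  apply/is_trig_mxP => i j ij; rewrite /LS.
  by rewrite /ulsubmx /usubmx /lsubmx !mxE; apply: Ltri.
apply/andP; split; apply: lt0r_neq0; apply: prodr_gt0 => i _.
  by rewrite mxE.
by rewrite /LS /ulsubmx /usubmx /lsubmx !mxE.
Qed.

Lemma BtMB : (SigSt p)^T *m Mmx *m SigSt p = 1%:M.
Proof.
have uB := SigSt_unit.
have uC : SigSt p *m (SigSt p)^T \in unitmx by rewrite unitmx_mul uB unitmx_tr uB.
set X := _ *m _ *m _.
have BX : SigSt p *m X = SigSt p.
  by rewrite /X !mulmxA /Mmx mulmxV ?mul1mx.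
by rewrite -(mulKmx uB X) BX mulVmx.
Qed.

Definition lastI : 'I_(n + 1) := rshift n (ord0 : 'I_1).

Lemma c0_eq : sigY p ^+ 2 - sc (Amx *m Mmx *m Amx^T) = sigY p ^+ 2 * Lc p lastI lastI ^+ 2.
Proof.
have -> : Amx *m Mmx *m Amx^T = sigY p ^+ 2 *: (LY p *m (LY p)^T).
  rewrite /Amx /SigYt -scalemxAl; move: BtMB; move: (SigSt p) Mmx (LY p) => B M X H.
  rewrite linearZ /= trmx_mul trmxK -!scalemxAl -!scalemxAr scalerA -expr2.
  congr (_ *: _); rewrite !mulmxA -(mulmxA _ _ M) -(mulmxA _ _ B).
  by rewrite H mulmx1.
rewrite sc_scale /sc mxE.
have := Lcorr lastI; rewrite mxE big_split_ord /= big_ord1 => H.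
have -> : \sum_j LY p 0 j * (LY p)^T j 0 = \sum_(i < n) Lc p lastI (lshift 1 i) * (Lc p)^T (lshift 1 i) lastI.
  apply: eq_bigr => i _. rewrite [(LY p)^T _ _]mxE [(Lc p)^T _ _]mxE /LY dlsubmxEsub mxE.
  by rewrite /lastI; congr (Lc p _ _ * Lc p _ _); apply/val_inj.
move: H; set S := \sum_(i < n) _ => H.
have -> : S = 1 - Lc p lastI (rshift n ord0) * (Lc p)^T (rshift n ord0) lastI by rewrite -H addrK.
rewrite mxE /lastI expr2; ring.
Qed.
End M.

Lemma quad_pos (R : realType) (c0 c1 c2 : R) : 0 < c0 ->
  exists2 eta, 0 < eta & forall x, `|x| < eta -> 0 < c0 + x * c1 + x ^+ 2 * c2.
Proof.
move=> c0p.
have b1 := normr_ge0 c1; have b2 := normr_ge0 c2.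
set K := `|c1| + `|c2| + 1.
have K0 : 0 < K by rewrite /K; lra.
exists (Num.min 1 (c0 / (2 * K))).
  by rewrite lt_min ltr01 divr_gt0 // mulr_gt0.
move=> x; rewrite lt_min => /andP[x1 x2].
have h1 := lerNnormlW (lexx `|x * c1|); rewrite normrM in h1.
have h2 := lerNnormlW (lexx `|x ^+ 2 * c2|); rewrite normrM normrX in h2.
move: x2; rewrite ltr_pdivlMr ?mulr_gt0 // => x2.
have a0 := normr_ge0 x.
have h3 : `|x| ^+ 2 * `|c2| <= `|x| * `|c2|.
  rewrite expr2 -mulrA ler_piMl // ?mulr_ge0 //; lra.
move: x2; rewrite /K => x2.
nra.
Qed.

Section G.
Variable R : realType.

Lemma expR_half_ln (q : R) : 0 < q -> expR (- (1 / 2 * ln q)) = (Num.sqrt q)^-1.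
Proof.
move=> q0; rewrite expRN; congr (_^-1).
have e2 : expR (1 / 2 * ln q) ^+ 2 = q.
  rewrite -expRM_natl (_ : 2%:R * _ = ln q); first by rewrite lnK. 
  by rewrite mulrA div1r mulfV ?pnatr_eq0 // mul1r.
by rewrite -[in RHS]e2 sqrtr_sqr gtr0_norm ?expR_gt0.
Qed.

Lemma Rint_pdf (K m s : R) :
  Rintegral lebesgue_measure setT (fun y => K * normal_pdf m s y) = K.
Proof.
rewrite RintegralZl //; last exact: integrable_normal_pdf.
by rewrite /Rintegral integral_normal_pdf /= ?mulr1.
Qed.

Lemma gauss_quad (C m v f b h : R) : 0 < v -> 0 < 1 - v * f ->
  Rintegral lebesgue_measure setT
    (fun y => C * expR (f / 2 * y ^+ 2 + b * y + h) * normal_pdf m (Num.sqrt v) y)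
  = C * expR (f / (1 - v * f) / 2 * m ^+ 2 + b / (1 - v * f) * m
      + (h - 1 / 2 * ln (1 - v * f) + 1 / 2 * (b ^+ 2 * v / (1 - v * f)))).
Proof.
move=> v0 q0; set q := 1 - v * f.
set K := RHS.
have vq0 : 0 < v / q by rewrite divr_gt0.
rewrite -(Rint_pdf K ((m + v * b) / q) (Num.sqrt (v / q))).
apply: eq_Rintegral => y _.
have s0 : Num.sqrt v != 0 by rewrite sqrtr_eq0 -ltNge.
have s0' : Num.sqrt (v / q) != 0 by rewrite sqrtr_eq0 -ltNge.
rewrite /normal_pdf (negbTE s0) (negbTE s0') /normal_peak /normal_fun.
rewrite !sqr_sqrtr ?ltW //.
have -> : v / q * pi *+ 2 = (v * pi *+ 2) * q^-1 by rewrite !mulr2n; ring.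
have pi0 : 0 < pi :> R by exact: pi_gt0.
rewrite sqrtrM ?mulrn_wge0 ?mulr_ge0 ?ltW // sqrtrV ?ltW //.
have -> : K = C * expR (f / q / 2 * m ^+ 2 + b / q * m + h + 1 / 2 * (b ^+ 2 * v / q)) * (Num.sqrt q)^-1.
  rewrite /K -expR_half_ln // -[RHS]mulrA -expRD; congr (_ * expR _); ring.
set Ea := f / 2 * y ^+ 2 + b * y + h.
set Eb := - (y - m) ^+ 2 / (v *+ 2).
set X := f / q / 2 * m ^+ 2 + b / q * m + h + 1 / 2 * (b ^+ 2 * v / q).
set Ec := - (y - (m + v * b) / q) ^+ 2 / (v / q *+ 2).
have E : expR Ea = expR X * expR Ec / expR Eb.
  rewrite -expRN -!expRD; congr expR.
  rewrite /Ea /X /Ec /Eb !mulr2n /q; field.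
  by apply/andP; split; apply: lt0r_neq0; [lra | exact: q0].
have sq0 : Num.sqrt q != 0 by rewrite sqrtr_eq0 -ltNge.
have S0 : Num.sqrt (v * pi *+ 2) != 0 by rewrite sqrtr_eq0 -ltNge mulrn_wgt0 // mulr_gt0.
have eb0 : expR Eb != 0 by rewrite gt_eqF // expR_gt0.
rewrite E; field.
by rewrite S0 sq0 eb0.
Qed.
End G.
End Helpers.
Theorem mainTheorem14 (R : realType) (n : nat) (p : params R n)
  (fh gh hh P : R -> R) :
  (0 < n)%N ->
  0 < rr p -> 0 < sigY p -> (forall i, 0 < sig p i) ->
  (* Lc is the Cholesky factor of a correlation matrix R = Lc Lc^T *)
  (forall i j : 'I_(n + 1), (i < j)%N -> Lc p i j = 0) ->
  (forall i : 'I_(n + 1), 0 < Lc p i i) ->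
  (forall i : 'I_(n + 1), (Lc p *m (Lc p)^T) i i = 1) ->
  (kk p <= n)%N -> 0 <= eps p -> 0 < TT p -> 0 < P0 p ->
  in_calP p (delta p) ->
  (* full-information system, zero terminal values *)
  solves_on (TT p) fh (fhat_rhs p fh) -> fh (TT p) = 0 ->
  solves_on (TT p) gh (ghat_rhs p fh gh) -> gh (TT p) = 0 ->
  solves_on (TT p) hh (hhat_rhs p fh gh) -> hh (TT p) = 0 ->
  (* conditional variance P *)
  solves_on (TT p) P (P_rhs p P) -> P 0 = P0 p ->
  (forall t, 0 <= t <= TT p -> 0 < 1 - P t * fh t) ->
  (* loss of utility L_t *)
  (forall t c g, 0 <= t <= TT p -> 0 < c ->
     gauss_exp g (P t) (vhat p fh gh hh t c) - Vhat p fh gh hh P t c g =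
     c `^ (1 - delta p) / (1 - delta p)
     * (expR ((1 - delta p) / 2 * Kt p fh P t) - 1)
     * expR (fbar fh P t / 2 * g ^+ 2 + gbar fh gh P t * g + hbar p fh gh hh P t))
  /\
  (* efficiency zeta *)
  (forall z, 0 < z ->
     (gauss_exp (Gam0 p) (P 0) (vhat p fh gh hh 0 z) - Vhat p fh gh hh P 0 1 (Gam0 p) = 0
      <-> z = expR (- (Kt p fh P 0 / 2)))).
Proof.
move=> n0 r0 sY0 sig0 Ltri Ldiag Lcorr kk0 e0 T0 P00 calP [cf df] fT [cg dg] gT
  [ch dh] hT [cP dP] P0eq qpos.
have dl1 : 1 - delta p != 0.
  by case: calP => [[_ d1]] _; rewrite subr_eq0 eq_sym.
set c1 := 2 * lam p - (sc (Amx p *m Mmx p *m av p) + sc ((av p)^T *m Mmx p *m (Amx p)^T)).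
set c2 := - sc ((av p)^T *m Mmx p *m av p).
have c0p : 0 < sigY p ^+ 2 - sc (Amx p *m Mmx p *m (Amx p)^T).
  by rewrite (c0_eq sig0 Ltri Ldiag Lcorr) mulr_gt0 ?exprn_gt0.
have [eta eta0 Heta] := quad_pos c1 c2 c0p.
have Ppos : forall t, 0 <= t <= TT p -> 0 < P t.
  apply: (ode_pos eta0 Heta cP) => //; last by rewrite P0eq.
  move=> t tin; have [d1 d2] := dP t tin; split => //.
  by rewrite d2 P_rhs_quad.
have key : forall t c g, 0 <= t <= TT p ->
  gauss_exp g (P t) (vhat p fh gh hh t c) =
  c `^ (1 - delta p) / (1 - delta p) * expR ((1 - delta p) / 2 * Kt p fh P t)
  * expR (fbar fh P t / 2 * g ^+ 2 + gbar fh gh P t * g + hbar p fh gh hh P t).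
  move=> t c g tin.
  rewrite /gauss_exp /vhat gauss_quad; [|exact: Ppos|exact: qpos].
  rewrite -[RHS]mulrA -expRD /fbar /gbar /hbar /dl; congr (_ * expR _); ring.
split.
  move=> t c g tin c0.
  rewrite key // /Vhat /dl; ring.
move=> z z0.
rewrite key; last by rewrite lexx ltW.
rewrite /Vhat powR1 /= /dl.
set X := expR (_ + _ + _).
have X0 : X != 0 by rewrite gt_eqF // expR_gt0.
rewrite /powR (gt_eqF z0).
set A := (1 - delta p) * ln z + (1 - delta p) / 2 * Kt p fh P 0.
have -> : expR ((1 - delta p) * ln z) / (1 - delta p) * expR ((1 - delta p) / 2 * Kt p fh P 0) * X
   - 1 / (1 - delta p) * X = (expR A - 1) * (X / (1 - delta p)).
  by rewrite /A expRD; field.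
have hA : A = (1 - delta p) * (ln z + Kt p fh P 0 / 2) by rewrite /A; field.
split.
  move/eqP; rewrite mulf_eq0 mulf_eq0 invr_eq0 (negbTE X0) (negbTE dl1) !orbF subr_eq0 => /eqP eA.
  have A0 : A = 0 by apply: expR_inj; rewrite eA expR0.
  move: A0; rewrite hA => /eqP; rewrite mulf_eq0 (negbTE dl1) /= addr_eq0 => /eqP <-.
  by rewrite lnK // posrE.
move=> ez.
have -> : A = 0 by rewrite hA ez expRK addNr mulr0.
by rewrite expR0 subrr mul0r.
Qed.
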